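(* Let $Y_1,Y_2,\ldots$ be i.i.d. Bernoulli$(1/2)$ and let $(Z^k)_k$ be generated by the bit-drop scheme described in the context, independently of $(Y_i)$. For integers $l\ge1$, $j\ge 0$ let $L^a_l(j)$ be the length of a longest common subsequence of $Z^j$ and $Y_1\ldots Y_l$. There are constants $C,c>0$ such that for every $\delta\in(0,1)$ and every $k\ge1$, $$P\Big(L^a_k\big(\lfloor 2(1-\delta)k\rfloor\big)=k\Big)\leq Ce^{-c\delta^2k}.$$
   Context: Bit-drop scheme: let $V_1,V_2,\ldots$ be i.i.d. Bernoulli$(1/2)$ and let $T_3,T_4,\ldots$ be independent, independent of $(V_k)$, with $T_{k+1}$ uniform on $\{2,\ldots,k\}$. Set $Z^2:=V_1V_2$ and, given $Z^k=Z^k_1\ldots Z^k_k$, define $Z^{k+1}_j:=Z^k_j$ for $j<T_{k+1}$, $Z^{k+1}_{T_{k+1}}:=V_{k+1}$, $Z^{k+1}_j:=Z^k_{j-1}$ for $T_{k+1}<j\le k+1$. Convention: $Z^0$ empty, $Z^1:=V_1$. *)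

(* Defs.v *)
From mathcomp Require Import all_boot all_order all_algebra.
From mathcomp Require Import all_classical all_reals all_analysis.
Set Implicit Arguments. Unset Strict Implicit. Unset Printing Implicit Defensive.
Import Order.TTheory GRing.Theory Num.Theory.
Local Open Scope ring_scope.

(* Bit-drop scheme.  v i = V_i (i >= 1), t i = T_i (i >= 3).
   Z^0 = [::], Z^1 = V_1, Z^2 = V_1 V_2, and Z^{k+1} is Z^k with V_{k+1}
   inserted so that it becomes letter number T_{k+1} (1-indexed). *)
Fixpoint bitdrop (v : nat -> bool) (t : nat -> nat) (k : nat) : seq bool :=
  match k with
  | 0 => [::]
  | k'.+1 =>
      if (k' == 0)%N then [:: v 1%N]
      else if (k' == 1)%N then [:: v 1%N; v 2%N]
      else let z := bitdrop v t k' in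
           take (t k).-1 z ++ v k :: drop (t k).-1 z
  end.

Definition lcs (s1 s2 : seq bool) : nat :=
  (\max_(m : (size s1).-tuple bool | subseq (mask m s1) s2) size (mask m s1))%N.

(* Finite sample space carrying (V_1..V_j), (T_3..T_j), (Y_1..Y_k). *)
Definition Omega (j k : nat) : finType :=
  (j.-tuple bool * {ffun 'I_j.+1 -> 'I_j.+1} * k.-tuple bool)%type.

Definition valid_T (j : nat) (t : {ffun 'I_j.+1 -> 'I_j.+1}) : bool :=
  [forall i : 'I_j.+1,
     if (3 <= i)%N then ((2 <= t i) && (t i < i))%N else t i == ord0].

Definition Vof (j : nat) (v : j.-tuple bool) : nat -> bool :=
  fun i => nth false v i.-1.

Definition Tof (j : nat) (t : {ffun 'I_j.+1 -> 'I_j.+1}) : nat -> nat :=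
  fun i => if (i <= j)%N then nat_of_ord (t (inord i)) else 0%N.

Definition Lak_event (j k : nat) (w : Omega j k) : bool :=
  let: (v, t, y) := w in
  lcs (bitdrop (Vof v) (Tof t) j) y == k.

(* Its probability: the V_i and Y_i are i.i.d. uniform bits, T_i uniform on
   {2..i-1}, all independent; on the finitely many relevant coordinates the
   law is the uniform distribution on admissible outcomes. *)
Definition Lak_prob (R : realType) (j k : nat) : R :=
  (#|[set w : Omega j k | valid_T w.1.2 && Lak_event w]|%:R /
   #|[set w : Omega j k | valid_T w.1.2]|%:R).

(* Main.v *)
Require Import Defs.
From mathcomp Require Import all_boot all_order all_algebra.
From mathcomp Require Import all_classical all_reals all_analysis.
From mathcomp Require Import ring lra.
Import Order.TTheory GRing.Theory Num.Theory.
Local Open Scope ring_scope.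

Lemma size_bitdrop v t n : size (bitdrop v t n) = n.
Proof.
elim: n => [|n IH] //.
case: n IH => [|[|n]] IH //=.
by rewrite size_cat /= addnS -size_cat cat_take_drop IH.
Qed.

Lemma bitdropS v t n : bitdrop v t n.+3 =
  take (t n.+3).-1 (bitdrop v t n.+2) ++ v n.+3 :: drop (t n.+3).-1 (bitdrop v t n.+2).
Proof. by []. Qed.

Lemma bitdrop_inj v v' t n : bitdrop v t n = bitdrop v' t n ->
  forall i, (1 <= i <= n)%N -> v i = v' i.
Proof.
elim: n => [|n IH]; first by move=> _ i /andP[h1 h2]; have := leq_trans h1 h2.
case: n IH => [|[|n]] IH.
- by move=> [] e i; rewrite -eqn_leq => /eqP <-.
- move=> [] e1 e2 i /andP[]; case: i => [|[|[|i]]] //.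
- rewrite !bitdropS => /eqP; rewrite eqseq_cat; last by rewrite !size_take !size_bitdrop.
  move=> /andP[/eqP et /eqP[ea ed]] i /andP[i1 iS].
  have ez : bitdrop v t n.+2 = bitdrop v' t n.+2.
    by rewrite -(cat_take_drop (t n.+3).-1 (bitdrop v t _)) et ed cat_take_drop.
  case: (ltngtP i n.+3) iS => // [lt _|-> _ //].
  by apply: IH => //; rewrite i1.
Qed.

Lemma lcs_subseq z y : lcs z y = size y -> subseq y z.
Proof.
case Hy: y => [|c y']; first by rewrite sub0seq.
rewrite -Hy => E.
apply: contraT => ns.
have : (lcs z y <= (size y).-1)%N; last by rewrite E Hy /= ltnn.
apply/bigmax_leqP => m sm.
have := size_subseq_leqif sm.
case=> le eq; move: le; rewrite leq_eqVlt eq; case: eqP => [e|_].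
  by rewrite -e mask_subseq in ns.
by rewrite Hy /=.
Qed.
Lemma sum_tupleS (R : realType) n (F : n.+1.-tuple bool -> R) :
  \sum_(z : n.+1.-tuple bool) F z =
  \sum_(b : bool) \sum_(z : n.-tuple bool) F [tuple of b :: z].
Proof.
rewrite pair_big /=.
rewrite (reindex (fun p : bool * n.-tuple bool => [tuple of p.1 :: p.2])) //=.
exists (fun z : n.+1.-tuple bool => (thead z, [tuple of behead z])) => [[b z] _|z _] /=.
  by congr pair; apply: val_inj.
by case/tupleP: z => b z; apply: val_inj.
Qed.

Lemma field_aux (R : realType) (a b x : R) : b != 0 -> x != 0 ->
  a * (1 + x) / (b * x) = a / b + a / (b * x).
Proof. move=> hb hx; field; by rewrite hb hx. Qed.

Lemma count_subseq (R : realType) (x : R) (hx : 1 <= x) n (y : seq bool) :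
  \sum_(z : n.-tuple bool) ((subseq y z)%:R : R) <= (1 + x) ^+ n / x ^+ size y.
Proof.
have x0 : 0 < x by apply: lt_le_trans hx.
elim: n y => [|n IH] [|c y].
- under eq_bigr => z _ do rewrite (size0nil (size_tuple z)).
  by rewrite sumr_const card_tuple card_bool /= !expr0 divr1.
- under eq_bigr => z _ do rewrite (size0nil (size_tuple z)).
  by rewrite /= sumr_const mul0rn expr0 mul1r invr_ge0 exprn_ge0 // ltW.
- rewrite /= expr0 divr1.
  under eq_bigr do rewrite sub0seq.
  rewrite sumr_const card_tuple card_bool.
  rewrite mulr1n natrX.
  by apply: lerXn2r; rewrite ?nnegrE; lra.
- rewrite sum_tupleS big_bool /=.
  have h1 := IH y; have h2 := IH (c :: y).
  have -> : (1 + x) ^+ n.+1 / x ^+ (size (c :: y)) =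
     (1 + x) ^+ n / x ^+ size y + (1 + x) ^+ n / x ^+ size (c :: y).
    by rewrite /= exprSr exprSr field_aux // ?expf_neq0 // gt_eqF.
  case: c h1 h2 => h1 h2 /=; first exact: lerD.
  by rewrite [X in X <= _]addrC; apply: lerD.
Qed.

Lemma card_sumR (R : realType) (T : finType) (P : pred T) :
  (#|[set w | P w]|%:R : R) = \sum_w (P w)%:R.
Proof.
rewrite -sum1dep_card natr_sum big_mkcond /=; apply: eq_bigr => w _.
by case: (P w).
Qed.

Lemma sum_triple (R : realType) (A B C : finType) (G : A * B * C -> R) :
  \sum_w G w = \sum_a \sum_b \sum_c G (a, b, c).
Proof.
have -> : \sum_w G w = \sum_(p : A * B) \sum_(c : C) G (p, c).
  by rewrite pair_big; apply: eq_bigr => -[p c].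
by rewrite [RHS]pair_big; apply: eq_big => // -[a b].
Qed.

Definition Zt j (t : nat -> nat) (v : j.-tuple bool) : j.-tuple bool :=
  @Tuple j bool _ (introT eqP (size_bitdrop (Vof v) t j)).

Lemma Zt_inj j t : injective (Zt j t).
Proof.
move=> v1 v2 /(congr1 val) /= /bitdrop_inj H.
apply: val_inj; apply: (@eq_from_nth _ false); rewrite !size_tuple // => i hi.
by have := H i.+1; rewrite /Vof /=; apply.
Qed.

Lemma F_bound (R : realType) (x : R) (hx : 1 <= x) j k (t : nat -> nat) :
  \sum_(v : j.-tuple bool) \sum_(y : k.-tuple bool)
     ((lcs (bitdrop (Vof v) t j) y == k) : nat)%:R
  <= (2%:R ^+ k : R) * ((1 + x) ^+ j / x ^+ k).
Proof.
rewrite exchange_big.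
apply: (@le_trans _ _ (\sum_(y : k.-tuple bool) \sum_(v : j.-tuple bool)
          ((subseq y (Zt j t v)) : nat)%:R)).
  apply: ler_sum => y _; apply: ler_sum => v _.
  case: eqP => // /eqP e; rewrite /Zt /=.
  have -> // : subseq y (bitdrop (Vof v) t j).
  by apply: lcs_subseq; rewrite size_tuple; apply/eqP.
apply: (@le_trans _ _ (\sum_(y : k.-tuple bool) ((1 + x) ^+ j / x ^+ k))).
  apply: ler_sum => y _.
  have -> : \sum_(v : j.-tuple bool) ((subseq y (Zt j t v)) : nat)%:R =
            \sum_(z : j.-tuple bool) ((subseq y z) : nat)%:R :> R.
    by rewrite [RHS](reindex_inj (Zt_inj j t)).
  by have := @count_subseq R x hx j y; rewrite size_tuple.
by rewrite sumr_const card_tuple card_bool -natrX mulr_natl.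
Qed.

Lemma prob_bound (R : realType) (x : R) (hx : 1 <= x) j k :
  Lak_prob R j k <= (1 + x) ^+ j / x ^+ k / 2%:R ^+ j.
Proof.
set beta := (1 + x) ^+ j / x ^+ k / 2%:R ^+ j.
have x0 : 0 < x by apply: lt_le_trans hx.
have hb : 0 <= beta.
  have h1x : 0 <= 1 + x by lra.
  by rewrite /beta !divr_ge0 // exprn_ge0 // ?ler0n // ltW.
have eA : (#|[set w : Omega j k | valid_T w.1.2 && Lak_event w]|%:R : R) =
  \sum_(t : {ffun 'I_j.+1 -> 'I_j.+1}) \sum_(v : j.-tuple bool) \sum_(y : k.-tuple bool)
     ((valid_T t && (lcs (bitdrop (Vof v) (Tof t) j) y == k)) : nat)%:R.
  by rewrite card_sumR sum_triple exchange_big.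
have eB : (#|[set w : Omega j k | valid_T w.1.2]|%:R : R) =
  \sum_(t : {ffun 'I_j.+1 -> 'I_j.+1}) \sum_(v : j.-tuple bool) \sum_(y : k.-tuple bool)
     ((valid_T t) : nat)%:R.
  by rewrite card_sumR sum_triple exchange_big.
rewrite /Lak_prob eA eB.
set A := \sum_t _; set B := \sum_t _.
have AB : A <= beta * B.
  rewrite /A /B mulr_sumr; apply: ler_sum => t _; case: (valid_T t).
  - rewrite (eq_bigr (fun v : j.-tuple bool => \sum_(y : k.-tuple bool)
        ((lcs (bitdrop (Vof v) (Tof t) j) y == k) : nat)%:R)); last first.
      by move=> v _; apply: eq_bigr.
    apply: le_trans (@F_bound R x hx j k (Tof t)) _.
    have -> : \sum_(v : j.-tuple bool) \sum_(y : k.-tuple bool) ((true : nat)%:R : R)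
              = 2%:R ^+ j * 2%:R ^+ k.
      under eq_bigr do rewrite sumr_const card_tuple card_bool.
      by rewrite sumr_const card_tuple card_bool -mulrnA mulr1n -!natrX -natrM mulnC.
    rewrite /beta le_eqVlt; apply/orP; left; apply/eqP.
    by field; rewrite !expf_neq0 // gt_eqF.
  - rewrite big1; last by move=> v _; rewrite big1.
    by apply: mulr_ge0 => //; do 2 (apply: sumr_ge0 => ? _); apply: ler0n.
have B0 : 0 <= B by rewrite /B; do 3 (apply: sumr_ge0 => ? _); apply: ler0n.
case: (eqVneq B 0) => [->|Bn0]; first by rewrite invr0 mulr0.
have Bp : 0 < B by rewrite lt_def Bn0 B0.
by rewrite ler_pdivrMr.
Qed.

Lemma final_ineq (R : realType) (d kk jj : R) : 0 < d < 1 -> 0 <= kk ->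
  0 <= jj <= 2 * (1 - d) * kk ->
  jj * (d / 4) + kk * (- (d / (2 + d))) <= - (1 / 4 * d ^+ 2 * kk).
Proof.
move=> /andP[d0 d1] k0 /andP[j0 jle].
have u : d / 2 - d ^+ 2 / 4 <= d / (2 + d).
  rewrite ler_pdivlMr; last by lra.
  have h : 0 <= d * d * d by rewrite !mulr_ge0 // ltW.
  rewrite expr2; nra.
set u' := d / (2 + d) in u *.
have h1 : 0 <= kk * (u' - (d / 2 - d ^+ 2 / 4)) by apply: mulr_ge0 => //; lra.
have h2 : 0 <= d * (2 * (1 - d) * kk - jj) by apply: mulr_ge0; lra.
rewrite expr2 in h1 *. nra.
Qed.

Lemma beta_bound (R : realType) (d : R) (j k : nat) : 0 < d < 1 ->
  (j%:R <= 2 * (1 - d) * k%:R) ->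
  (1 + (1 + d / 2)) ^+ j / (1 + d / 2) ^+ k / 2%:R ^+ j
   <= expR (- (1 / 4 * d ^+ 2 * k%:R)).
Proof.
move=> /andP[d0 d1] hj.
have e1 : (1 + (1 + d / 2)) ^+ j / (1 + d / 2) ^+ k / 2%:R ^+ j
   = (1 + d / 4) ^+ j * ((1 + d / 2)^-1) ^+ k.
  have -> : 1 + d / 4 = (1 + (1 + d / 2)) / 2 by field.
  by rewrite expr_div_n exprVn mulrAC.
rewrite e1.
have a1 : (1 + d / 4) ^+ j <= expR (j%:R * (d / 4)).
  rewrite expRM_natl; apply: lerXn2r; rewrite ?nnegrE ?expR_ge0 //; first lra.
  exact: expR_ge1Dx.
have a2 : ((1 + d / 2)^-1) ^+ k <= expR (k%:R * (- (d / (2 + d)))).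
  rewrite expRM_natl; apply: lerXn2r; rewrite ?nnegrE ?expR_ge0 //.
    rewrite invr_ge0; lra.
  have -> : (1 + d / 2)^-1 = 1 + - (d / (2 + d)) by field; lra.
  exact: expR_ge1Dx.
apply: le_trans (ler_pM _ _ a1 a2) _.
- rewrite exprn_ge0 //; lra.
- rewrite exprn_ge0 // invr_ge0; lra.
rewrite -expRD ler_expR.
by apply: final_ineq; rewrite ?d0 ?d1 ?ler0n ?hj //=.
Qed.

Theorem lemma15 (R : realType) :
  exists C c : R, 0 < C /\ 0 < c /\
    forall (delta : R) (k : nat), 0 < delta < 1 -> (1 <= k)%N ->
      Lak_prob R (Num.truncn (2 * (1 - delta) * k%:R)) k
        <= C * expR (- (c * delta ^+ 2 * k%:R)).
Proof.
exists 1, (1 / 4); split; first lra; split; first lra.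
move=> d k /andP[d0 d1] _.
rewrite mul1r.
set j := Num.truncn _.
have hj : j%:R <= 2 * (1 - d) * k%:R.
  rewrite truncn_le; apply: mulr_ge0; [lra | exact: ler0n].
have hx : (1 : R) <= 1 + d / 2 by lra.
apply: le_trans (@prob_bound R (1 + d / 2) hx j k) _.
apply: beta_bound => //; by rewrite d0 d1.
Qed.
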